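(* Fix $\alpha\in(0,1)$. Let $X_i$ take values $-1,0,1$ with probabilities $\frac{1-\alpha}{2-\alpha},\ \frac{\alpha}{2-\alpha},\ \frac{1-\alpha}{2-\alpha}$ respectively, and $Y_i=X_i+\epsilon_i$ with $\epsilon_i\mid X_i\sim\mathrm{Uniform}([-2|X_i|,2|X_i|])$ (so $\epsilon_i=0$ when $X_i=0$), with $(X_i,Y_i)$, $i=1,\ldots,n+1$, i.i.d. Let $V(x,y)=|y-x|$, take the localizer $H_{i,j}=\mathbb 1\{|X_j-X_i|\le 1.5\}$, and use $\tilde\alpha=\alpha$ without tuning. Then, as $n\to\infty$, $\mathbb P\{V_{n+1}\le Q(\alpha;\hat{\mathcal F})\}\to\frac{\alpha}{2-\alpha}=1-\frac{2(1-\alpha)}{2-\alpha}$, i.e. the coverage falls short of $\alpha$ asymptotically by $\frac{\alpha(1-\alpha)}{2-\alpha}$.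
   Context: $p^H_{i,j}=H_{i,j}/\sum_{k=1}^{n+1}H_{i,k}$; $V_i=V(X_i,Y_i)$; $\hat{\mathcal F}=\sum_{j=1}^{n}p^H_{n+1,j}\delta_{V_j}+p^H_{n+1,n+1}\delta_{\infty}$, where $\delta_v$ is the point mass at $v$. For a probability distribution $\mathcal F$ on $\mathbb R\cup\{\infty\}$ and $a\in[0,1]$, $Q(a;\mathcal F)=\inf\{t:\mathbb P_{T\sim\mathcal F}(T\le t)\ge a\}$. *)

(* Defs.v *)
From HB Require Import structures.
From mathcomp Require Import all_boot all_order all_algebra.
From mathcomp Require Import all_classical all_reals all_analysis.
Set Implicit Arguments. Unset Strict Implicit. Unset Printing Implicit Defensive.
Import Order.TTheory GRing.Theory Num.Theory.
Import numFieldNormedType.Exports.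
Local Open Scope classical_set_scope.
Local Open Scope ring_scope.

Section Conformal.
Variable R : realType.

Definition Vscore (x y : R) : R := `|y - x|.

Definition Hloc (xi xj : R) : R := if `|xj - xi| <= 3 / 2 then 1 else 0.

(* Indices are 0-based: data points 0..n, test point is index n
   (paper: 1..n+1, test point n+1). *)

Definition pH (X : nat -> R) (n j : nat) : R :=
  Hloc (X n) (X j) / \sum_(k < n.+1) Hloc (X n) (X k).

(* CDF of \hat F = sum_{j<n} p^H_{n+1,j} delta_{V_j} + p^H_{n+1,n+1} delta_oo,
   evaluated at t in R \cup {-oo, +oo}: P_{T ~ \hat F}(T <= t). *)
Definition Fhat_cdf (X V : nat -> R) (n : nat) (t : \bar R) : R :=
  match t with
  | -oo%E => 0
  | +oo%E => 1
  | (r%:E)%E => \sum_(j < n) pH X n j * (if V j <= r then 1 else 0)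
  end.

Definition Qhat (a : R) (X V : nat -> R) (n : nat) : \bar R :=
  ereal_inf [set t : \bar R | a <= Fhat_cdf X V n t].

Definition pairs_indep (d : measure_display) (T : measurableType d)
  (P : probability T R) (X Y : nat -> T -> R) : Prop :=
  forall (J : seq nat) (B : nat -> set (R * R)),
    uniq J -> (forall j, j \in J -> measurable (B j)) ->
    P (\big[setI/setT]_(j <- J) [set w | B j (X j w, Y j w)]) =
    (\prod_(j <- J) P [set w | B j (X j w, Y j w)])%E.

End Conformal.

(* Main.v *)
Require Import Defs.
From HB Require Import structures.
From mathcomp Require Import all_boot all_order all_algebra.
From mathcomp Require Import all_classical all_reals all_analysis.
From mathcomp Require Import lra ring.
Import Order.TTheory GRing.Theory Num.Theory.
Import numFieldNormedType.Exports.
Local Open Scope classical_set_scope.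
Local Open Scope ring_scope.
Set Implicit Arguments. Unset Strict Implicit. Unset Printing Implicit Defensive.
Section PrHelpers.
Context (R : realType) (d : measure_display) (T : measurableType d)
  (P : probability T R).

Definition Pr (A : set T) : R := fine (P A).

Lemma PrE A : measurable A -> P A = (Pr A)%:E.
Proof. by move=> mA; rewrite /Pr fineK // fin_num_measure. Qed.

Lemma Pr_ge0 A : 0 <= Pr A.
Proof. exact: fine_ge0 (measure_ge0 P A). Qed.

Lemma Pr_le A B : measurable A -> measurable B -> A `<=` B -> Pr A <= Pr B.
Proof.
move=> mA mB AB; rewrite -lee_fin -!PrE //.
by apply: le_measure => //; rewrite inE.
Qed.

Lemma PrT : Pr setT = 1.
Proof. by rewrite /Pr probability_setT. Qed.

Lemma Pr_le1 A : measurable A -> Pr A <= 1.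
Proof. by move=> mA; rewrite -PrT; apply: Pr_le. Qed.

Lemma PrU2 A B : measurable A -> measurable B -> Pr (A `|` B) <= Pr A + Pr B.
Proof.
move=> mA mB; rewrite -lee_fin EFinD -!PrE //; last exact: measurableU.
exact: measureU2.
Qed.

Lemma PrUdisj A B : measurable A -> measurable B -> A `&` B = set0 ->
  Pr (A `|` B) = Pr A + Pr B.
Proof.
move=> mA mB AB; apply/eqP; rewrite -eqe EFinD -!PrE //; last exact: measurableU.
by rewrite measureU.
Qed.

Lemma Pr_bigU (I : Type) (r : seq I) (Q : pred I) (F : I -> set T) :
  (forall i, Q i -> measurable (F i)) ->
  measurable (\big[setU/set0]_(i <- r | Q i) F i) /\
  Pr (\big[setU/set0]_(i <- r | Q i) F i) <= \sum_(i <- r | Q i) Pr (F i).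
Proof.
move=> mF.
apply: (big_rec2 (fun S x => measurable S /\ Pr S <= x)).
  by split => //; rewrite /Pr measure0.
move=> i S x Qi [mS le]; split; first exact: measurableU (mF i Qi) mS.
by rewrite (le_trans (PrU2 (mF i Qi) mS)) // lerD2l.
Qed.

End PrHelpers.
Section Quant.
Context (R : realType).
Implicit Types (x v : nat -> R) (n : nat).

Definition ind (b : bool) : R := if b then 1 else 0.

Definition Nden x n : R := \sum_(k < n.+1) Hloc (x n) (x k).
Definition Snum x v n (r : R) : R :=
  \sum_(j < n) Hloc (x n) (x j) * ind (v j <= r).

Lemma Hloc_ge0 a b : 0 <= Hloc a b :> R.
Proof. by rewrite /Hloc; case: ifP. Qed.

Lemma Hloc_self a : Hloc a a = 1 :> R.
Proof. by rewrite /Hloc subrr normr0 ifT // divr_ge0. Qed.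

Lemma Nden_ge1 x n : 1 <= Nden x n.
Proof.
rewrite /Nden big_ord_recr /= {2}/Hloc subrr normr0 ifT; last first.
  by rewrite divr_ge0.
by rewrite lerDr sumr_ge0 // => i _; exact: Hloc_ge0.
Qed.

Lemma Fhat_E x v n r : Fhat_cdf x v n r%:E = Snum x v n r / Nden x n.
Proof.
rewrite /= /Snum mulr_suml; apply: eq_bigr => j _.
by rewrite /pH /ind mulrAC.
Qed.

Lemma Fhat_lt x v n r a :
  (Fhat_cdf x v n r%:E < a) = (Snum x v n r < a * Nden x n).
Proof.
have N0 : 0 < Nden x n by apply: lt_le_trans (Nden_ge1 x n).
by rewrite Fhat_E ltr_pdivrMr.
Qed.

Lemma covered_r (a : R) x v n : 0 < a ->
  ((v n)%:E <= Qhat a x v n)%E <->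
  (forall r, a <= Fhat_cdf x v n r%:E -> v n <= r).
Proof.
move=> a0; split.
  move=> h r hr; rewrite -lee_fin; apply: le_trans h _.
  exact: ereal_inf_lbound.
move=> h; apply: le_ereal_inf_tmp => -[r| |] //=.
- by move=> /h; rewrite lee_fin.
- by move=> _; rewrite leey.
- by rewrite leNgt a0.
Qed.

Lemma covered_fin (a : R) x v n : 0 < a -> (forall j, 0 <= v j) ->
  ((v n)%:E <= Qhat a x v n)%E <->
  (forall j : 'I_n, v j < v n -> Snum x v n (v j) < a * Nden x n).
Proof.
move=> a0 v0; rewrite covered_r //; split.
  move=> h j vj; rewrite -Fhat_lt ltNge; apply/negP => /h.
  by rewrite leNgt vj.
move=> h r hr; rewrite leNgt; apply/negP => rvn.
have [j0 hj0] : exists j0 : 'I_n, v j0 <= r.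
  apply/not_existsP => hne.
  move: hr; rewrite Fhat_E /Snum big1 ?mul0r ?leNgt ?a0 // => j _.
  rewrite /ind ifF ?mulr0 //; apply/negP => hj; exact: (hne j).
case: (@arg_maxP _ R _ j0 (fun j : 'I_n => v j <= r) (fun j => v j) hj0).
move=> jm hjm hmax.
have eqS : Snum x v n r = Snum x v n (v jm).
  apply: eq_bigr => k _; congr (_ * ind _); apply/idP/idP.
    by move=> hk; exact: hmax.
  by move=> hk; exact: le_trans hk hjm.
have := h jm (le_lt_trans hjm rvn).
by rewrite -eqS -Fhat_lt ltNge hr.
Qed.

End Quant.
Arguments ind {R}.
Section Meas.
Context (R : realType) (d : measure_display) (T : measurableType d).
Implicit Types f g : T -> R.
Let mtrue (R0 : Type) : measurable [set true].
Proof. by []. Qed.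

Lemma mle f g : measurable_fun setT f -> measurable_fun setT g ->
  measurable [set w | f w <= g w].
Proof.
move=> mf mg; have := measurable_realfun.measurable_fun_ler mf mg measurableT (mtrue R).
rewrite setTI; congr (measurable _); apply/seteqP; split => w //=.
Qed.

Lemma mlt f g : measurable_fun setT f -> measurable_fun setT g ->
  measurable [set w | f w < g w].
Proof.
move=> mf mg; have := measurable_realfun.measurable_fun_ltr mf mg measurableT (mtrue R).
rewrite setTI; congr (measurable _); apply/seteqP; split => w //=.
Qed.

Lemma mind f g : measurable_fun setT f -> measurable_fun setT g ->
  measurable_fun setT (fun w => (ind (f w <= g w) : R)).
Proof.
move=> mf mg; apply: measurable_fun_ifT => //.
exact: measurable_realfun.measurable_fun_ler.
Qed.

Lemma mHloc f g : measurable_fun setT f -> measurable_fun setT g ->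
  measurable_fun setT (fun w => Hloc (f w) (g w)).
Proof.
move=> mf mg; apply: measurable_fun_ifT => //.
apply: measurable_realfun.measurable_fun_ler => //.
by apply: measurableT_comp => //; exact: measurable_realfun.measurable_funB.
Qed.

Lemma mV f g : measurable_fun setT f -> measurable_fun setT g ->
  measurable_fun setT (fun w => Vscore (f w) (g w)).
Proof.
move=> mf mg; apply: measurableT_comp => //; exact: measurable_realfun.measurable_funB.
Qed.

Lemma in_bigsetI (I : eqType) (r : seq I) (Q : pred I) (F : I -> set T) w :
  (\big[setI/setT]_(i <- r | Q i) F i) w <-> (forall i, Q i -> i \in r -> F i w).
Proof.
elim: r => [|i r IH]; first by rewrite big_nil.
rewrite big_cons; case: ifP => Qi; split.
- move=> [Fi /IH h] j Qj; rewrite in_cons => /orP [/eqP -> //|]; exact: h.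
- move=> h; split; first by apply: h => //; rewrite mem_head.
  by apply/IH => j Qj jr; apply: h => //; rewrite in_cons jr orbT.
- move=> /IH h j Qj; rewrite in_cons => /orP [/eqP ji|]; last exact: h.
  by rewrite ji Qi in Qj.
- by move=> h; apply/IH => j Qj jr; apply: h => //; rewrite in_cons jr orbT.
Qed.

End Meas.
Section Cheb.
Context (R : realType) (n : nat) (J : finType) (q : 'I_n -> J -> R) (g : J -> R).
Hypothesis q0 : forall i t, 0 <= q i t.
Hypothesis q1 : forall i, \sum_t q i t = 1.
Hypothesis g1 : forall t, `|g t| <= 1.

Let m i := \sum_t q i t * g t.
Let phi i t := g t - m i.
Let w (s : {ffun 'I_n -> J}) := \prod_i q i (s i).

Let w0 s : 0 <= w s.
Proof. by apply: prodr_ge0 => i _. Qed.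

Let m1 i : `|m i| <= 1.
Proof.
rewrite /m (le_trans (ler_norm_sum _ _ _)) // -(q1 i) ler_sum // => t _.
by rewrite normrM ger0_norm // ler_piMr.
Qed.

Let phi2 i t : phi i t ^+ 2 <= 4.
Proof.
have h : `|phi i t| <= 2.
  by rewrite /phi (le_trans (ler_normB _ _)) // (_ : 2 = 1 + 1) // lerD.
rewrite -real_normK ?num_real //.
have -> : 4 = 2 ^+ 2 :> R by rewrite expr2; lra.
by rewrite lerXn2r // ?nnegrE.
Qed.

Let key i k :
  \sum_s w s * (phi i (s i) * phi k (s k)) =
  \prod_j \sum_t (q j t * ((if j == i then phi i t else 1) *
                          (if j == k then phi k t else 1))).
Proof.
rewrite bigA_distr_bigA /=; apply: eq_bigr => s _.
rewrite big_split /= big_split /=.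
congr (_ * (_ * _)).
  by rewrite [RHS](bigD1 i) //= eqxx big1 ?mulr1 // => j /negbTE ->.
by rewrite [RHS](bigD1 k) //= eqxx big1 ?mulr1 // => j /negbTE ->.
Qed.

Let sumphi i : \sum_t q i t * phi i t = 0.
Proof.
rewrite /phi; under eq_bigr do rewrite mulrBr.
by rewrite sumrB -mulr_suml q1 mul1r subrr.
Qed.

Let key_bound i k : \sum_s w s * (phi i (s i) * phi k (s k)) <= if i == k then 4 else 0.
Proof.
rewrite key (bigD1 i) //= eqxx.
case: (eqVneq i k) => [<-|ik].
  rewrite [X in _ * X]big1 ?mulr1; last first.
    by move=> j /negbTE ->; under eq_bigr do rewrite !mulr1; exact: q1.
  rewrite (le_trans (_ : _ <= \sum_t q i t * 4)) //.
    by apply: ler_sum => t _; rewrite -expr2; apply: ler_wpM2l.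
  by rewrite -mulr_suml q1 mul1r.
by under eq_bigr do rewrite mulr1; rewrite sumphi mul0r.
Qed.

Lemma second_moment :
  \sum_s w s * (\sum_i phi i (s i)) ^+ 2 <= 4 * n%:R.
Proof.
under eq_bigr do rewrite expr2 mulr_suml mulr_sumr.
rewrite exchange_big /=.
apply: le_trans (_ : \sum_(i < n) 4 <= _); last by rewrite sumr_const card_ord mulr_natr.
apply: ler_sum => i _.
under eq_bigr do rewrite !mulr_sumr.
rewrite exchange_big /=.
apply: le_trans (_ : \sum_(k < n) (if i == k then 4 else 0) <= _).
  by apply: ler_sum => k _; apply: key_bound.
by rewrite (bigD1 i) //= eqxx big1 ?addr0 // => k /negbTE; rewrite eq_sym => ->.
Qed.

Lemma cheb (c a : R) :
  (forall i, c <= m i) -> a < n%:R * c ->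
  \sum_(s : {ffun 'I_n -> J} | \sum_i g (s i) < a) \prod_i q i (s i)
    <= 4 * n%:R / (n%:R * c - a) ^+ 2.
Proof.
move=> hc ha.
set D := n%:R * c - a.
have D0 : 0 < D by rewrite subr_gt0.
have M0 : n%:R * c <= \sum_i m i.
  have -> : n%:R * c = \sum_(i < n) c by rewrite sumr_const card_ord mulr_natl.
  by apply: ler_sum => i _.
apply: le_trans (_ : \sum_s w s * ((\sum_i phi i (s i)) ^+ 2 / D ^+ 2) <= _).
  rewrite big_mkcond /=; apply: ler_sum => s _; case: ifP => hs; last first.
    by rewrite mulr_ge0 // divr_ge0 // sqr_ge0.
  have ws := w0 s; rewrite /w in ws; rewrite ler_peMr //.
  rewrite ler_pdivlMr ?exprn_gt0 // mul1r.
  have hsum : \sum_i phi i (s i) = \sum_i g (s i) - \sum_i m i.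
    by rewrite /phi sumrB.
  rewrite hsum.
  have h1 : D <= \sum_i m i - \sum_i g (s i) by rewrite /D; lra.
  set u := \sum_i m i - \sum_i g (s i) in h1 *.
  have -> : \sum_i g (s i) - \sum_i m i = - u by rewrite /u opprB.
  rewrite sqrrN; nra.
under eq_bigr do rewrite mulrA.
rewrite -mulr_suml ler_wpM2r //; first by rewrite invr_ge0 sqr_ge0.
exact: second_moment.
Qed.

End Cheb.
Definition t0 : 'I_3 := @Ordinal 3 0 isT.
Definition t1 : 'I_3 := @Ordinal 3 1 isT.
Definition t2 : 'I_3 := @Ordinal 3 2 isT.

Lemma ord3P (t : 'I_3) : t = t0 \/ t = t1 \/ t = t2.
Proof.
case: t => -[|[|[|k]]] ht.
- by left; apply: val_inj.
- by right; left; apply: val_inj.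
- by right; right; apply: val_inj.
- by [].
Qed.

Lemma sum3 (R : realType) (f : 'I_3 -> R) : \sum_(t < 3) f t = f t0 + f t1 + f t2.
Proof.
rewrite !big_ord_recr big_ord0 /= GRing.add0r.
by congr (f _ + f _ + f _); apply: val_inj.
Qed.
Section Main.
Context (R : realType) (alpha : R) (d : measure_display) (T : measurableType d)
  (P : probability T R) (X Y : nat -> {RV P >-> R}).
Hypothesis ha : 0 < alpha < 1.

Let mX i : measurable_fun setT (X i) := measurable_funPT (X i).
Let mY i : measurable_fun setT (Y i) := measurable_funPT (Y i).

Definition Ev n := [set w | ((Vscore (X n w) (Y n w))%:E <=
  Qhat alpha (fun i => X i w) (fun i => Vscore (X i w) (Y i w)) n)%E].

Lemma mEv n : measurable (Ev n).
Proof.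
have a0 : 0 < alpha by case/andP: ha.
have -> : Ev n = \big[setI/setT]_(j < n)
   ([set w | Vscore (X n w) (Y n w) <= Vscore (X j w) (Y j w)] `|`
    [set w | Snum (fun i => X i w) (fun i => Vscore (X i w) (Y i w)) n
               (Vscore (X j w) (Y j w)) <
             alpha * Nden (fun i => X i w) n]).
  apply/seteqP; split => w.
    rewrite /Ev /= covered_fin //; last by move=> j; exact: normr_ge0.
    move=> h; apply/in_bigsetI => j _ _.
    case: (leP (Vscore (X n w) (Y n w)) (Vscore (X j w) (Y j w))) => hj.
      by left.
    by right; apply: h.
  move=> /in_bigsetI h; rewrite /Ev /= covered_fin //; last by move=> j; exact: normr_ge0.
  move=> j hj; case: (h j isT (mem_index_enum _)) => //=.
  by rewrite leNgt hj.
apply: bigsetI_measurable => j _; apply: measurableU.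
  by apply: mle; apply: mV.
apply: mlt.
  rewrite /Snum; apply: measurable_sum => k.
  apply: measurable_realfun.measurable_funM; first exact: mHloc.
  by apply: mind; apply: mV.
apply: measurable_realfun.measurable_funM; first exact: measurable_cst.
rewrite /Nden; apply: measurable_sum => k; exact: mHloc.
Qed.

Hypothesis h0 : forall i (A : set R), measurable A ->
     P [set w | X i w = 0 /\ A (Y i w - X i w)] =
     ((alpha / (2 - alpha))%:E * \d_(0%R : R) A)%E.
Hypothesis h1 : forall i (x : R) (A : set R), (x = -1 \/ x = 1) -> measurable A ->
     P [set w | X i w = x /\ A (Y i w - X i w)] =
     (((1 - alpha) / (2 - alpha))%:E *
        (lebesgue_measure (A `&` `[(-2)%R, 2%R]) * (4^-1)%:E))%E.

Lemma a2pos : 0 < 2 - alpha.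
Proof. by case/andP: ha => ? ?; lra. Qed.
Lemma a2ne : 2 - alpha != 0.
Proof. by rewrite gt_eqF // a2pos. Qed.

Definition p0 := alpha / (2 - alpha).
Definition p1 := (1 - alpha) / (2 - alpha).

Definition Sx i x (A : set R) := [set w | X i w = x /\ A (Y i w - X i w)].

Lemma mSx i x A : measurable A -> measurable (Sx i x A).
Proof.
move=> mA.
have -> : Sx i x A = X i @^-1` [set x] `&` (fun w => Y i w - X i w) @^-1` A by [].
apply: measurableI; first exact: measurable_funPTI (measurable_set1 x).
have := measurable_realfun.measurable_funB (mY i) (mX i) measurableT mA.
by rewrite setTI.
Qed.

Lemma Pr_S0 i : Pr P (Sx i 0 [set 0]) = p0.
Proof.
apply/eqP; rewrite -eqe -PrE; last by apply: mSx; exact: measurable_set1.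
by rewrite h0 ?diracE ?in_set1 ?eqxx ?mule1 //; exact: measurable_set1.
Qed.

Lemma leb_itv (a : R) : 0 <= a <= 2 ->
  lebesgue_measure (`[- a, a] `&` `[(-2)%R, 2%R]) = (2 * a)%:E.
Proof.
case/andP => a0 a2; rewrite setIidl; last first.
  move=> z /=; rewrite !in_itv /= => /andP [h1' h2'].
  apply/andP; split; lra.
rewrite lebesgue_measure_itv /=; case: ifP => h; first by rewrite -EFinB; congr (_%:E); lra.
have -> : a = 0 by move: h; rewrite lte_fin => /negbT; rewrite -leNgt => ?; lra.
by rewrite mulr0.
Qed.

Lemma Pr_Sc i c (del : R) : (c = -1 \/ c = 1) -> 0 <= del <= 2 ->
  Pr P (Sx i c `[- del, del]) = p1 * del / 2.
Proof.
move=> hc hd; apply/eqP; rewrite -eqe -PrE; last by apply/mSx.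
rewrite h1 // leb_itv // -!EFinM; apply/eqP; congr (_%:E).
by rewrite /p1; field; exact: a2ne.
Qed.

Lemma Pr_ScT i c : (c = -1 \/ c = 1) -> Pr P (Sx i c setT) = p1.
Proof.
move=> hc; apply/eqP; rewrite -eqe -PrE; last by apply/mSx.
rewrite h1 // setTI -[X in lebesgue_measure X]setIid leb_itv; last by apply/andP; split; lra.
rewrite -!EFinM; apply/eqP; congr (_%:E); by rewrite /p1; field; exact: a2ne.
Qed.
Definition ty (c del x y : R) : 'I_3 :=
  if `|x - c| <= 3/2 then (if `|y - x| <= del then t0 else t1) else t2.

Definition gg (t : 'I_3) : R :=
  if t == t0 then 1 - alpha else if t == t1 then - alpha else 0.

Lemma gg_ty c del x y :
  Hloc c x * (ind (`|y - x| <= del) - alpha) = gg (ty c del x y).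
Proof.
rewrite /Hloc /ty /ind /gg; case: ifP => _; last by rewrite mul0r.
by case: ifP => _ /=; rewrite mul1r // sub0r.
Qed.

Lemma gg_bound t : `|gg t| <= 1.
Proof.
case/andP: ha => a0 a1.
rewrite /gg; case: ifP => _; first by rewrite ger0_norm; lra.
by case: ifP => _; rewrite ?normr0 ?normrN ?ger0_norm; lra.
Qed.

Definition Bty c del t : set (R * R) := [set p | ty c del p.1 p.2 = t].

Lemma mBty c del t : measurable (Bty c del t).
Proof.
have mU : measurable [set p : R * R | `|p.1 - c| <= 3/2].
  apply: (mle (f := fun p : R * R => `|p.1 - c|) (g := cst (3/2))) => //.
  apply: measurableT_comp => //.
  by apply: measurable_realfun.measurable_funB => //; exact: measurable_fst.
have mW : measurable [set p : R * R | `|p.2 - p.1| <= del].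
  apply: (mle (f := fun p : R * R => `|p.2 - p.1|) (g := cst del)) => //.
  apply: measurableT_comp => //.
  by apply: measurable_realfun.measurable_funB; [exact: measurable_snd|exact: measurable_fst].
case: (ord3P t) => [->|[->|->]].
- have -> : Bty c del t0 = [set p : R * R | `|p.1 - c| <= 3/2] `&`
                           [set p : R * R | `|p.2 - p.1| <= del].
    apply/seteqP; split => p; rewrite /Bty /ty /=.
      by case: ifP => // hh; case: ifP.
    by case=> -> ->.
  exact: measurableI.
- have -> : Bty c del t1 = [set p : R * R | `|p.1 - c| <= 3/2] `&`
                           ~` [set p : R * R | `|p.2 - p.1| <= del].
    apply/seteqP; split => p; rewrite /Bty /ty /=.
      by case: ifP => // hh; case: ifP => // ->.
    by case=> -> /negP/negbTE ->.
  by apply: measurableI => //; exact: measurableC.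
- have -> : Bty c del t2 = ~` [set p : R * R | `|p.1 - c| <= 3/2].
    apply/seteqP; split => p; rewrite /Bty /ty /=.
      by case: ifP => // hh; case: ifP.
    by move=> /negP/negbTE ->.
  exact: measurableC.
Qed.

Definition At c del i t := [set w | Bty c del t (X i w, Y i w)].

Lemma mAt c del i t : measurable (At c del i t).
Proof.
have := measurable_fun_pair (mX i) (mY i) measurableT (mBty c del t).
by rewrite setTI.
Qed.
Hypothesis hind : pairs_indep P (fun i => X i : T -> R) (fun i => Y i : T -> R).

Definition Bs c del n (s : {ffun 'I_n -> 'I_3}) (j : nat) : set (R * R) :=
  match @insub _ _ 'I_n j with Some i => Bty c del (s i) | None => setT end.

Definition Atom c del n (s : {ffun 'I_n -> 'I_3}) :=
  \big[setI/setT]_(j <- index_iota 0 n) [set w | Bs c del s j (X j w, Y j w)].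

Lemma mBs c del n s j : measurable (@Bs c del n s j).
Proof. by rewrite /Bs; case: insub => [i|] //; exact: mBty. Qed.

Lemma mAtom c del n s : measurable (@Atom c del n s).
Proof.
apply: bigsetI_measurable => j _.
have := measurable_fun_pair (mX j) (mY j) measurableT (mBs c del s j).
by rewrite setTI.
Qed.

Lemma PrAtom c del n s :
  Pr P (@Atom c del n s) = \prod_(i < n) Pr P (At c del i (s i)).
Proof.
apply/eqP; rewrite -eqe -PrE; last exact: mAtom.
rewrite /Atom hind; last 2 first.
- exact: iota_uniq.
- by move=> j _; exact: mBs.
rewrite big_mkord -prodEFin; apply/eqP; apply: eq_bigr => i _.
rewrite -PrE; last exact: mAt.
by rewrite /Bs valK.
Qed.

Lemma inAtom c del n w :
  @Atom c del n [ffun i : 'I_n => ty c del (X i w) (Y i w)] w.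
Proof.
apply/in_bigsetI => j _; rewrite mem_index_iota => /andP [_ jn].
by rewrite /Bs insubT /= ffunE.
Qed.
Definition q c del i t := Pr P (At c del i t).

Lemma q_sum c del i : \sum_(t < 3) q c del i t = 1.
Proof.
have m0 := mAt c del i t0; have m1 := mAt c del i t1; have m2 := mAt c del i t2.
rewrite sum3 /q -PrUdisj //; last first.
  by apply/seteqP; split => w //; rewrite /At /Bty /= => -[-> //].
rewrite -PrUdisj //; last 2 first.
- exact: measurableU.
- by apply/seteqP; split => w //; rewrite /At /Bty /= => -[[->|->] //].
rewrite -(PrT P); congr (Pr P _); apply/seteqP; split => w // _.
rewrite /At /Bty /=.
by case: (ord3P (ty c del (X i w) (Y i w))) => [->|[->|->]]; [left; left|left; right|right].
Qed.

Lemma mean_bound c del i : (c = -1 \/ c = 1) -> 0 < del <= 2 ->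
  p1 * del / 2 <= \sum_t q c del i t * gg t.
Proof.
move=> hc /andP [d0 d2].
case/andP: ha => a0 a1.
have c0 : c != 0 by case: hc => ->; rewrite ?oppr_eq0 oner_eq0.
have hq0 : p0 + p1 * del / 2 <= q c del i t0.
  rewrite -(Pr_S0 i) -(@Pr_Sc i c del) //; last by apply/andP; split; lra.
  rewrite -PrUdisj; last 3 first.
  - by apply: mSx; exact: measurable_set1.
  - exact: mSx.
  - apply/seteqP; split => w //= [[h _] [h' _]].
    by move: c0; rewrite -h' h eqxx.
  apply: Pr_le.
  - by apply: measurableU; apply: mSx => //; exact: measurable_set1.
  - exact: mAt.
  move=> w [[hx hy]|[hx hy]]; rewrite /At /Bty /ty /=.
    have b1 : `|X i w - c| <= 3/2.
      by rewrite hx sub0r normrN; case: hc => ->; rewrite ?normrN normr1; lra.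
    have b2 : `|Y i w - X i w| <= del by rewrite hy normr0; lra.
    by rewrite b1 b2.
  have b1 : `|X i w - c| <= 3/2 by rewrite hx subrr normr0; lra.
  have b2 : `|Y i w - X i w| <= del.
    by rewrite ler_norml; move: hy; rewrite /= in_itv /=.
  by rewrite b1 b2.
have hq2 : p1 <= q c del i t2.
  rewrite -(@Pr_ScT i (- c)); last by case: hc => ->; rewrite ?opprK; [right|left].
  apply: Pr_le; [exact: mSx|exact: mAt|].
  move=> w [hx _]; rewrite /At /Bty /ty /= hx ifF //.
  apply/negbTE; rewrite -ltNge ltr_normr; apply/orP.
  by case: hc => ->; [left|right]; lra.
have hsum := q_sum c del i; rewrite sum3 in hsum.
have e : p0 - alpha + alpha * p1 = 0 by rewrite /p0 /p1; field; exact: a2ne.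
rewrite sum3 /gg /= mulr0 addr0.
nra.
Qed.
Definition Bad c del n :=
  \big[setU/set0]_(s : {ffun 'I_n -> 'I_3} | \sum_i gg (s i) < alpha) Atom c del s.

Lemma Pr_Bad c del n : (c = -1 \/ c = 1) -> 0 < del <= 2 ->
  alpha < n%:R * (p1 * del / 2) ->
  measurable (Bad c del n) /\
  Pr P (Bad c del n) <= 4 * n%:R / (n%:R * (p1 * del / 2) - alpha) ^+ 2.
Proof.
move=> hc hd hn.
have [mB hB] := @Pr_bigU _ _ _ P _ (index_enum {ffun 'I_n -> 'I_3})
   (fun s : {ffun 'I_n -> 'I_3} => \sum_i gg (s i) < alpha)
   (fun s => Atom c del s) (fun s _ => mAtom c del s).
split => //; apply: le_trans hB _.
under eq_bigr do rewrite PrAtom.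
apply: (@cheb R n _ (q c del) gg).
- by move=> i t; exact: Pr_ge0.
- by move=> i; exact: q_sum.
- exact: gg_bound.
- by move=> i; exact: mean_bound.
- exact: hn.
Qed.

Lemma in_bigsetU (I : eqType) (r : seq I) (Q : pred I) (F : I -> set T) w i :
  Q i -> i \in r -> F i w -> (\big[setU/set0]_(j <- r | Q j) F j) w.
Proof.
move=> Qi; elim: r => [//|j r IH]; rewrite in_cons big_cons => /orP [/eqP <-|ir] Fw.
  by rewrite Qi; left.
by case: ifP => _; [right|]; exact: IH.
Qed.

Lemma incl n c del : (c = -1 \/ c = 1) ->
  Ev n `&` [set w | X n w = c] `<=` Sx n c `[- del, del] `|` Bad c del n.
Proof.
case/andP: ha => a0 a1 hc w [hE hx].
case: (leP (`|Y n w - X n w|) del) => hyd.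
  left; split => //=; rewrite in_itv /=; by rewrite -ler_norml.
right.
have hF : Snum (fun i => X i w) (fun i => Vscore (X i w) (Y i w)) n del <
          alpha * Nden (fun i => X i w) n.
  rewrite -Fhat_lt ltNge; apply/negP => hF.
  have := (proj1 (covered_r _ _ _ a0) hE) del hF.
  by rewrite /Vscore leNgt hyd.
apply: (in_bigsetU (i := [ffun i : 'I_n => ty c del (X i w) (Y i w)])).
- rewrite /=.
  have -> : \sum_(i < n) gg ([ffun i : 'I_n => ty c del (X i w) (Y i w)] i) =
            Snum (fun i => X i w) (fun i => Vscore (X i w) (Y i w)) n del -
            alpha * (Nden (fun i => X i w) n - 1).
    rewrite /Nden big_ord_recr /= Hloc_self.
    rewrite addrK /Snum mulr_sumr -sumrB; apply: eq_bigr => i _.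
    by rewrite ffunE -gg_ty hx /Vscore mulrBr [alpha * _]mulrC.
  move: hF; lra.
- exact: mem_index_enum.
- exact: inAtom.
Qed.

Lemma incl0 n : Sx n 0 [set 0] `<=` Ev n.
Proof.
case/andP: ha => a0 a1 w [hx hy]; rewrite /Ev /=.
have hv : Vscore (X n w) (Y n w) = 0 by rewrite /Vscore hy normr0.
apply/(covered_r _ _ _ a0) => r hr; rewrite hv leNgt; apply/negP => r0.
move: hr; rewrite Fhat_E /Snum big1 ?mul0r; first by rewrite leNgt a0.
move=> j _; rewrite /ind ifF ?mulr0 //; apply/negbTE; rewrite -ltNge.
by apply: lt_le_trans r0 _; exact: normr_ge0.
Qed.
Lemma PrC (A : set T) : measurable A -> Pr P (~` A) = 1 - Pr P A.
Proof.
move=> mA; apply/eqP; rewrite -eqe -PrE; last exact: measurableC.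
by rewrite probability_setC // PrE.
Qed.

Lemma lower n : p0 <= Pr P (Ev n).
Proof.
rewrite -(Pr_S0 n); apply: Pr_le; [|exact: mEv|exact: incl0].
by apply: mSx; exact: measurable_set1.
Qed.

Definition Bn del n := 4 * n%:R / (n%:R * (p1 * del / 2) - alpha) ^+ 2.

Lemma upper n del : 0 < del <= 2 -> alpha < n%:R * (p1 * del / 2) ->
  Pr P (Ev n) <= p0 + p1 * del + 2 * Bn del n.
Proof.
move=> hd hn.
have hc1 : (1 : R) = -1 \/ (1 : R) = 1 by right.
have hc2 : (-1 : R) = -1 \/ (-1 : R) = 1 by left.
have [mB1 hB1] := Pr_Bad hc1 hd hn.
have [mB2 hB2] := Pr_Bad hc2 hd hn.
have d2 : 0 <= del <= 2 by case/andP: hd => ? ?; apply/andP; split => //; lra.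
have mS1 := mSx n 1 (measurableT : measurable (setT : set R)).
have mS2 := mSx n (-1) (measurableT : measurable (setT : set R)).
have mN : measurable (~` (Sx n 1 setT `|` Sx n (-1) setT)).
  by apply: measurableC; exact: measurableU.
have mI1 : measurable (Sx n 1 `[- del, del]) by apply: mSx.
have mI2 : measurable (Sx n (-1) `[- del, del]) by apply: mSx.
have hN : Pr P (~` (Sx n 1 setT `|` Sx n (-1) setT)) = p0.
  rewrite PrC; last exact: measurableU.
  rewrite PrUdisj //; last first.
    apply/seteqP; split => w //= [[h _] [h' _]].
    by move: h'; rewrite h => /eqP; rewrite -subr_eq0 opprK; lra.
  rewrite !Pr_ScT //; rewrite /p0 /p1; field; exact: a2ne.
have sub : Ev n `<=` ~` (Sx n 1 setT `|` Sx n (-1) setT) `|`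
    ((Sx n 1 `[- del, del] `|` Bad 1 del n) `|`
     (Sx n (-1) `[- del, del] `|` Bad (-1) del n)).
  move=> w hw.
  have [h1'|h1'] := eqVneq (X n w) 1.
    by right; left; apply: (incl (c := 1)) => //; split.
  have [h2'|h2'] := eqVneq (X n w) (-1).
    by right; right; apply: (incl (c := -1)) => //; split.
  left => -[[h _]|[h _]]; [by rewrite h eqxx in h1'|by rewrite h eqxx in h2'].
have mU1 : measurable (Sx n 1 `[- del, del] `|` Bad 1 del n) by exact: measurableU.
have mU2 : measurable (Sx n (-1) `[- del, del] `|` Bad (-1) del n) by exact: measurableU.
have mBig : measurable (~` (Sx n 1 setT `|` Sx n (-1) setT) `|`
    ((Sx n 1 `[- del, del] `|` Bad 1 del n) `|`
     (Sx n (-1) `[- del, del] `|` Bad (-1) del n))).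
  by apply: measurableU => //; exact: measurableU.
have hA := Pr_le P (mEv n) mBig sub.
have hB := PrU2 P mN (measurableU _ _ mU1 mU2).
have hC := PrU2 P mU1 mU2.
have hD := PrU2 P mI1 mB1; have hE := PrU2 P mI2 mB2.
rewrite !Pr_Sc // hN in hA hB hC hD hE.
rewrite /Bn in hB1 hB2 *; lra.
Qed.
Lemma conv : (fun n => P (Ev n)) @ \oo --> (p0)%:E.
Proof.
case/andP: ha => a0 a1.
have a2 := a2pos.
have p0pos : 0 < p0 by rewrite /p0 divr_gt0.
have p1pos : 0 < p1 by rewrite /p1 divr_gt0 // subr_gt0.
have p1le1 : p1 <= 1 by rewrite /p1 ler_pdivrMr // mul1r; lra.
apply/(neq0_fine_cvgP _ (lt0r_neq0 p0pos)).
have -> : fine \o (fun n => P (Ev n)) = fun n => Pr P (Ev n) by [].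
apply/cvgrPdist_le => e e0.
set del := Num.min 1 (e / 2).
have dle1 : del <= 1 by rewrite /del ge_min lexx.
have dlee : del <= e / 2 by rewrite /del ge_min lexx orbT.
have dpos : 0 < del by rewrite /del lt_min ltr01 /=; lra.
have hd : 0 < del <= 2 by apply/andP; split => //; lra.
have hpd : p1 * del <= e / 2 by nra.
set c0 := p1 * del / 2.
have c0pos : 0 < c0 by rewrite /c0; apply: divr_gt0 => //; exact: mulr_gt0.
set K := 2 * alpha / c0 + 64 / (c0 ^+ 2 * e).
have K1 : 0 <= 2 * alpha / c0 by apply: divr_ge0; lra.
have K2 : 0 <= 64 / (c0 ^+ 2 * e).
  by apply: divr_ge0 => //; apply: mulr_ge0 => //; rewrite ?sqr_ge0 // ltW.
apply: filterS (nbhs_infty_ge (Num.truncn K).+1) => n /= hn.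
have hK : K < n%:R.
  apply: lt_le_trans (Num.Theory.truncnS_gt K) _; by rewrite ler_nat.
set x := n%:R in hK.
have hx1 : 2 * alpha < x * c0.
  have : 2 * alpha / c0 < x by rewrite /K in hK; lra.
  by rewrite ltr_pdivrMr.
have hx2 : 64 < x * (c0 ^+ 2 * e).
  have : 64 / (c0 ^+ 2 * e) < x by rewrite /K in hK; lra.
  rewrite ltr_pdivrMr; first by rewrite mulrC.
  by apply: mulr_gt0 => //; exact: exprn_gt0.
have hn1 : alpha < n%:R * c0 by rewrite -/x; lra.
have hB : Bn del n <= e / 4.
  rewrite /Bn -/c0 -/x.
  set D := x * c0 - alpha.
  have hD : x * c0 / 2 <= D by rewrite /D; lra.
  have Dpos : 0 < D by rewrite /D; lra.
  rewrite ler_pdivrMr; last exact: exprn_gt0.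
  have x0 : 0 <= x by rewrite /x.
  have h00 : 0 <= x * c0 / 2 by apply: divr_ge0 => //; apply: mulr_ge0 => //; exact: ltW.
  have hD2 : (x * c0 / 2) ^+ 2 <= D ^+ 2 by rewrite !expr2; apply: ler_pM.
  have e4 : (x * c0 / 2) ^+ 2 = x * c0 ^+ 2 * x / 4 by rewrite !expr2; field.
  rewrite e4 in hD2.
  nra.
have hl := lower n.
have hu := upper hd hn1.
rewrite distrC ger0_norm ?subr_ge0 //.
lra.
Qed.
End Main.

Unset Implicit Arguments.

Theorem mainTheorem6 (R : realType) (alpha : R)
  (d : measure_display) (T : measurableType d) (P : probability T R)
  (X Y : nat -> {RV P >-> R}) :
  0 < alpha < 1 ->
  (* (X_i, Y_i) are mutually independent *)
  pairs_indep P (fun i => X i : T -> R) (fun i => Y i : T -> R) ->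
  (* law of each pair: X_i = 0 w.p. alpha/(2-alpha), and then eps_i = Y_i - X_i = 0 *)
  (forall i (A : set R), measurable A ->
     P [set w | X i w = 0 /\ A (Y i w - X i w)] =
     ((alpha / (2 - alpha))%:E * \d_(0%R : R) A)%E) ->
  (* X_i = x in {-1, 1} w.p. (1-alpha)/(2-alpha) each, and then
     eps_i = Y_i - X_i ~ Uniform[-2,2] *)
  (forall i (x : R) (A : set R), (x = -1 \/ x = 1) -> measurable A ->
     P [set w | X i w = x /\ A (Y i w - X i w)] =
     (((1 - alpha) / (2 - alpha))%:E *
        (lebesgue_measure (A `&` `[(-2)%R, 2%R]) * (4^-1)%:E))%E) ->
  (fun n : nat =>
     P [set w | ((Vscore (X n w) (Y n w))%:E <=
                 Qhat alpha (fun i => X i w) (fun i => Vscore (X i w) (Y i w)) n)%E])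
    @ \oo --> (alpha / (2 - alpha))%:E.
Proof.
move=> ha hind h0 h1.
exact: (conv ha h0 h1 hind).
Qed.
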